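(* The language $L_5\subseteq\{a,b\}^*$ does not belong to $Pol(\mathcal{C}om)(\{a,b\})$.
   Context: $L_5$ is the language recognized by the deterministic automaton with states $1,2,3,4,5$, initial state $1$, accepting set $\{5\}$, and transitions $\delta(1,a)=\delta(1,b)=2$, $\delta(2,a)=5$, $\delta(2,b)=3$, $\delta(3,a)=4$, $\delta(3,b)=5$, $\delta(4,a)=3$, $\delta(4,b)=1$, $\delta(5,a)=\delta(5,b)=5$. $\mathcal{C}om(\Sigma)$ is the set of regular languages over $\Sigma$ whose syntactic monoid ($\Sigma^*/\equiv_L$, where $x\equiv_L y$ iff $uxv\in L\Leftrightarrow uyv\in L$ for all $u,v$) is commutative; $Pol(\mathcal{C}om)(\Sigma)$ is the set of finite unions of languages $L_0a_1L_1\cdots a_kL_k$ with $k\ge0$, $a_i\in\Sigma$, $L_i\in\mathcal{C}om(\Sigma)$. *)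

(* Defs.v *)
From Stdlib Require Import List.
From mathcomp Require Import all_boot.
Set Implicit Arguments. Unset Strict Implicit. Unset Printing Implicit Defensive.

Inductive Sigma : Type := sa | sb.

Definition word := seq Sigma.
Definition lang := word -> Prop.

Definition regular (L : lang) : Prop :=
  exists (Q : finType) (q0 : Q) (d : Q -> Sigma -> Q) (F : pred Q),
    forall w : word, L w <-> F (foldl d q0 w).

Definition synt_equiv (L : lang) (x y : word) : Prop :=
  forall u v : word, L (u ++ x ++ v) <-> L (u ++ y ++ v).

Definition synt_commutative (L : lang) : Prop :=
  forall x y : word, synt_equiv L (x ++ y) (y ++ x).

Definition Com (L : lang) : Prop := regular L /\ synt_commutative L.

(* Membership in the marked product L0 a1 L1 ... ak Lk, where the list
   [(a1,L1);...;(ak,Lk)] is the tail. *)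
Fixpoint in_marked_prod (L0 : lang) (rest : seq (Sigma * lang)) (w : word) : Prop :=
  match rest with
  | [::] => L0 w
  | (a, L1) :: rest' =>
      exists u v : word, w = u ++ a :: v /\ L0 u /\ in_marked_prod L1 rest' v
  end.

Definition PolCom (L : lang) : Prop :=
  exists mons : seq (lang * seq (Sigma * lang)),
    (forall m, List.In m mons -> Com m.1 /\ forall p, List.In p m.2 -> Com p.2) /\
    forall w : word, L w <-> exists m, List.In m mons /\ in_marked_prod m.1 m.2 w.

Definition delta5 (q : nat) (c : Sigma) : nat :=
  match q, c with
  | 1, _ => 2
  | 2, sa => 5
  | 2, sb => 3
  | 3, sa => 4
  | 3, sb => 5
  | 4, sa => 3
  | 4, sb => 1
  | 5, _ => 5
  | q, _ => q (* unreachable states *)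
  end.

Definition L5 : lang := fun w => foldl delta5 1 w = 5.

(* Main.v *)
Require Import Defs.
From mathcomp Require Import all_boot.

Fixpoint Bn (n : nat) : word :=
  if n is n'.+1 then sa :: sb :: sa :: sb :: Bn n' else [::].

Definition X : word := [:: sa; sb; sa; sa; sa; sb; sb; sb].

Lemma swap1 (L : lang) (H : synt_commutative L) (r p : word) c d q :
  L (r ++ p ++ c :: d :: q) -> L (r ++ p ++ d :: c :: q).
Proof.
have := H [:: c] [:: d] (r ++ p) q.
by rewrite -!catA /= => ->.
Qed.

Lemma permBB (L : lang) (H : synt_commutative L) r t :
  L (r ++ Bn 2 ++ t) -> L (r ++ X ++ t).
Proof.
move=> H0.
have H1 := @swap1 L H r [:: sa; sb; sa] _ _ _ H0.
have H2 := @swap1 L H r [:: sa; sb; sa; sa; sb] _ _ _ H1.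
have H3 := @swap1 L H r [:: sa; sb; sa; sa] _ _ _ H2.
exact H3.
Qed.

Lemma split_cat (u v P Q : word) a :
  u ++ a :: v = P ++ Q ->
  (exists u', u = P ++ u' /\ Q = u' ++ a :: v) \/
  (exists r', P = u ++ a :: r' /\ v = r' ++ Q).
Proof.
elim: P u => [|p P IH] u /=.
  move=> E; left; exists u; by split.
case: u => [|x u] /= E.
  case: E => -> ->; right; by exists P.
case: E => <- E.
case: (IH u E) => [[u' [-> ->]]|[r' [-> ->]]].
  by left; exists u'.
by right; exists r'.
Qed.

Lemma G (rest : seq (Sigma * lang)) : forall L0 : lang,
  synt_commutative L0 ->
  (forall p, List.In p rest -> synt_commutative p.2) ->
  forall r n s, 2 * size rest + 2 <= n ->
  in_marked_prod L0 rest (r ++ Bn n ++ s) ->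
  exists i j, in_marked_prod L0 rest (r ++ Bn i ++ X ++ Bn j ++ s).
Proof.
elim: rest => [|[a L1] rest IH] L0 HL0 Hr r n s Hn /=.
  case: n Hn => [|[|n]] // _ H.
  exists 0, n => /=.
  apply: (@permBB L0 HL0 r (Bn n ++ s)).
  exact H.
have : 2 <= n by apply: leq_trans Hn; rewrite leq_addl.
case: n Hn => [|[|n]] // Hn _ [u [v [E [Hu Hv]]]].
have E' : u ++ a :: v = (r ++ Bn 2) ++ (Bn n ++ s).
  by rewrite -E -catA.
case: (split_cat _ _ _ _ _ E') => [[u' [Eu EQ]]|[r' [EP Ev]]].
  exists 0, n; exists (r ++ X ++ u'), v; split.
    by rewrite /= EQ -!catA.
  split => //.
  by apply: (@permBB L0 HL0 r u'); rewrite catA -Eu.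
have Hr1 : synt_commutative L1 by apply: (Hr (a, L1)); left.
have Hr' : forall p, List.In p rest -> synt_commutative p.2.
  by move=> p Hp; apply: Hr; right.
have Hn' : 2 * size rest + 2 <= n.
  by move: Hn; rewrite mulnS !addSn !ltnS.
rewrite Ev in Hv.
have [i [j H]] := IH L1 Hr1 Hr' r' n s Hn' Hv.
exists i.+2, j, u, (r' ++ Bn i ++ X ++ Bn j ++ s); split => //.
have -> : Bn i.+2 = Bn 2 ++ Bn i by [].
by rewrite -catA catA EP -catA.
Qed.

Lemma run_B q n : q = 1 \/ q = 3 -> foldl delta5 q (Bn n) = q.
Proof. by case=> ->; elim: n. Qed.

Lemma notL5 i j : ~ L5 (Bn i ++ X ++ Bn j ++ [:: sa; sa]).
Proof.
rewrite /L5 !foldl_cat (run_B 1 i (or_introl erefl)) /=.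
by rewrite (run_B 3 j (or_intror erefl)).
Qed.

Lemma inL5 n : L5 (Bn n ++ [:: sa; sa]).
Proof. by rewrite /L5 foldl_cat (run_B 1 n (or_introl erefl)). Qed.

Lemma size_le (mons : seq (lang * seq (Sigma * lang))) m :
  List.In m mons -> size m.2 <= sumn (map (fun m => size m.2) mons).
Proof.
elim: mons => [|x mons IH] //= [<-|H]; first exact: leq_addr.
by apply: leq_trans (IH H) _; apply: leq_addl.
Qed.

Theorem mainTheorem16 : ~ PolCom L5.
Proof.
move=> [mons [Hc Hw]].
set N := sumn (map (fun m => size m.2) mons).
have [m [Hm Hin]] := (proj1 (Hw _)) (inL5 (2 * N + 2)).
have [Hc1 Hc2] := Hc m Hm.
have Hn : 2 * size m.2 + 2 <= 2 * N + 2.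
  by rewrite leq_add2r leq_mul2l size_le.
have [i [j H]] := @G m.2 m.1 (proj2 Hc1) (fun p Hp => proj2 (Hc2 p Hp)) [::] _ _ Hn Hin.
apply: (notL5 i j); apply/Hw; by exists m.
Qed.
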